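(* Let $f$ be a nonzero polynomial whose multiset of reproducible zeros equals its full zero multiset, $R(f)=Z(f)$, and write $$R(f)=Z(f)=\{\underbrace{\beta_1,\dots,\beta_1}_{r_1},\dots,\underbrace{\beta_n,\dots,\beta_n}_{r_n}\}$$ with $\beta_1,\dots,\beta_n$ distinct. Then $$[f]=\Big(\operatorname{span}\big\{k_{\beta_j}^{(\ell)}:0\le\ell\le r_j-1,\ 1\le j\le n\big\}\Big)^{\perp}.$$
   Context: Standing assumptions: $\Omega\subset\mathbb C$ is a domain with $0\in\Omega$, $\mathcal H$ is a Hilbert space of analytic functions on $\Omega$ with bounded point evaluations at points of $\Omega$, the shift $(Sf)(z)=zf(z)$ is bounded on $\mathcal H$, and the polynomials $\mathcal P$ are dense in $\mathcal H$. For $g\in\mathcal H$, $[g]$ is the closure in $\mathcal H$ of $\operatorname{span}\{z^kg:k\ge0\}$. A point $\beta\in\mathbb C$ is reproducible of order $m\ge0$ if $p\mapsto p^{(m)}(\beta)$ on $\mathcal P$ extends to a bounded linear functional on $\mathcal H$; $k_\beta^{(m)}\in\mathcal H$ denotes the element representing this functional, $\langle g,k_\beta^{(m)}\rangle=g^{(m)}(\beta)$ (the value of the extension). $\beta$ is a reproducible point if reproducible of order $0$; reproducibility of order $m$ implies that of all orders $j\le m$; $\operatorname{ro}(\beta)\in\{0,1,\dots\}\cup\{\infty\}$ is the supremum of the orders of reproducibility. For a nonzero polynomial $p$: $Z(p)$ is its zero multiset (each zero listed with its multiplicity), and $R(p)$ is its multiset of reproducible zeros: each reproducible point $\beta$ at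 which $p$ has a zero of order $m\ge1$ is listed $\min\{m,\operatorname{ro}(\beta)+1\}$ times, and non-reproducible zeros are omitted. *)

(* Defs.v *)
From HB Require Import structures.
From mathcomp Require Import all_boot all_order all_algebra.
From mathcomp Require Import complex.
From mathcomp Require Import boolp classical_sets reals.
Set Implicit Arguments. Unset Strict Implicit. Unset Printing Implicit Defensive.
Import Order.TTheory GRing.Theory Num.Theory.
Local Open Scope ring_scope.

Section AHS.
Variable R : realType.
Local Notation C := (R[i]).

Definition openC (A : set C) : Prop :=
  forall z, A z -> exists2 r : C, 0 < r & forall w, `|w - z| < r -> A w.

Definition connectedC (A : set C) : Prop :=
  forall U1 U2 : set C, openC U1 -> openC U2 ->
    (forall z, A z -> U1 z \/ U2 z) ->
    (forall z, ~ (A z /\ U1 z /\ U2 z)) ->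
    (forall z, ~ (A z /\ U1 z)) \/ (forall z, ~ (A z /\ U2 z)).

Definition domainC (A : set C) : Prop := openC A /\ connectedC A.

Definition C_differentiable (g : C -> C) (z : C) : Prop :=
  exists d : C, forall e : C, 0 < e -> exists2 del : C, 0 < del &
    forall w, 0 < `|w - z| < del -> `|(g w - g z) / (w - z) - d| < e.

Definition analytic_on (A : set C) (g : C -> C) : Prop :=
  forall z, A z -> C_differentiable g z.

Variable V : lmodType C.
Variable ip : V -> V -> C.        (* inner product, linear in the first variable *)

Definition nrm (v : V) : C := sqrtC (ip v v).

Definition is_inner_product : Prop :=
  [/\ forall a u v w, ip (a *: u + v) w = a * ip u w + ip v w,
      forall u v, ip u v = (ip v u)^*,
      forall v, 0 <= ip v v &
      forall v, ip v v = 0 -> v = 0].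

Definition cauchy_seq (u : nat -> V) : Prop :=
  forall e : C, 0 < e -> exists N, forall m n, (N <= m)%N -> (N <= n)%N ->
    nrm (u m - u n) < e.

Definition converges_to (u : nat -> V) (v : V) : Prop :=
  forall e : C, 0 < e -> exists N, forall n, (N <= n)%N -> nrm (u n - v) < e.

Definition complete_space : Prop :=
  forall u : nat -> V, cauchy_seq u -> exists v, converges_to u v.

(** Standing assumptions: (V, ip) is a Hilbert space of analytic functions
    on the domain Om (elements are realized as functions through the
    injective linear map [ev]) with bounded point evaluations on Om; the
    shift [S] (Sf)(z) = z f(z) is a bounded operator on H; polynomials
    belong to H ([pv p] is the element of H equal to p on Om) and are dense. *)
Definition AnalyticHilbertSpace (Om : set C) (ev : V -> C -> C)
    (S : V -> V) (pv : {poly C} -> V) : Prop :=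
  [/\ (domainC Om /\ Om 0) /\ (is_inner_product /\ complete_space),
      (forall a u v z, ev (a *: u + v) z = a * ev u z + ev v z)
      /\ (forall u v, (forall z, Om z -> ev u z = ev v z) -> u = v),
      (forall v, analytic_on Om (ev v))
      /\ (forall z, Om z -> exists M : C, forall v, `|ev v z| <= M * nrm v),
      (forall v z, Om z -> ev (S v) z = z * ev v z)
      /\ (exists M : C, forall v, nrm (S v) <= M * nrm v) &
      (forall p z, Om z -> ev (pv p) z = p.[z])
      /\ (forall v e, 0 < e -> exists p, nrm (v - pv p) < e)].

Definition lspan (A : set V) : set V :=
  [set v | exists n (a : 'I_n -> C) (x : 'I_n -> V),
            (forall i, A (x i)) /\ v = \sum_(i < n) a i *: x i].

Definition closureH (A : set V) : set V :=
  [set v | forall e : C, 0 < e -> exists2 w, A w & nrm (v - w) < e].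

Definition orth (A : set V) : set V := [set v | forall w, A w -> ip v w = 0].

(** [g] : closure of span{ z^k g : k >= 0 } *)
Definition cyc (S : V -> V) (g : V) : set V :=
  closureH (lspan [set iter k S g | k in [set: nat]]).

Variable pv : {poly C} -> V.

Definition deriv_ext (beta : C) (m : nat) (L : V -> C) : Prop :=
  [/\ forall a u v, L (a *: u + v) = a * L u + L v,
      (exists M : C, forall v, `|L v| <= M * nrm v) &
      forall p : {poly C}, L (pv p) = (p^`(m)).[beta]].

Definition reproducible (m : nat) (beta : C) : Prop :=
  exists L, deriv_ext beta m L.

Definition is_kernel (beta : C) (m : nat) (k : V) : Prop :=
  exists L, deriv_ext beta m L /\ forall g, ip g k = L g.

(** ro(beta) : None stands for infinity; Some m for the finite supremum m. *)
Definition ro (beta : C) : option nat :=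
  if pselect (exists m, forall n, reproducible n beta -> (n <= m)%N)
  then Some (xget 0%N [set m | reproducible m beta /\
                              forall n, reproducible n beta -> (n <= m)%N])
  else None.

(** multiplicity of beta in the multiset Z(p) *)
Definition Zmult (p : {poly C}) (beta : C) : nat := mup beta p.

(** multiplicity of beta in the multiset R(p) *)
Definition Rmult (p : {poly C}) (beta : C) : nat :=
  if pselect (reproducible 0 beta) then
    match ro beta with
    | None => mup beta p
    | Some r => minn (mup beta p) r.+1
    end
  else 0%N.

End AHS.

(* Main.v *)
Require Import Defs.
From HB Require Import structures.
From mathcomp Require Import all_boot all_order all_algebra.
From mathcomp Require Import complex.
From mathcomp Require Import boolp classical_sets reals.
From mathcomp Require Import ring.
Set Implicit Arguments. Unset Strict Implicit. Unset Printing Implicit Defensive.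
Import Order.TTheory GRing.Theory Num.Theory.
Local Open Scope ring_scope.

Section PolyAux.
Variable F : numClosedFieldType.

Lemma derivn_XsubCM (b : F) (Q : {poly F}) m :
  (('X - b%:P) * Q)^`(m.+1) = Q^`(m) *+ m.+1 + ('X - b%:P) * Q^`(m.+1).
Proof.
elim: m => [|m IH].
  by rewrite derivn1 derivM derivXsubC mul1r derivn0 derivn1 mulr1n.
rewrite derivnS IH derivD derivMn derivM derivXsubC mul1r -!derivnS.
by rewrite addrA -mulrSr.
Qed.

Lemma derivn_XsubCX_eval (b : F) (Q : {poly F}) m :
  ((('X - b%:P) ^+ m * Q)^`(m)).[b] = Q.[b] *+ m`!.
Proof.
elim: m Q => [|m IH] Q; first by rewrite expr0 mul1r derivn0.
rewrite exprS -mulrA derivn_XsubCM hornerD hornerMn IH.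
by rewrite hornerM hornerXsubC subrr mul0r addr0 -mulrnA factS mulnC.
Qed.

Lemma derivn_vanish (b : F) (P : {poly F}) k j :
  ('X - b%:P) ^+ k %| P -> (j < k)%N -> (P^`(j)).[b] = 0.
Proof.
move=> /dvdpP [q ->] ltjk.
rewrite -(subnKC (ltnW ltjk)) exprD mulrC -mulrA.
rewrite derivn_XsubCX_eval hornerM horner_exp hornerXsubC subrr expr0n.
by rewrite subn_eq0 leqNgt ltjk mul0r mul0rn.
Qed.

Lemma derivn_sumZ m b (s : seq (F * nat * {poly F})) (c : F * nat * {poly F} -> F) :
  ((\sum_(t <- s) c t *: t.2)^`(m)).[b] = \sum_(t <- s) c t * (t.2^`(m)).[b].
Proof.
elim: s => [|t s IHs]; first by rewrite !big_nil derivn_poly0 ?size_poly0 // horner0.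
by rewrite !big_cons derivnD hornerD IHs derivnZ hornerZ.
Qed.

Lemma hermite (f : {poly F}) : f != 0 -> exists s : seq (F * nat * {poly F}),
  (forall t, t \in s -> root f t.1.1 /\ (t.1.2 < mup t.1.1 f)%N) /\
  forall p, f %| p - \sum_(t <- s) (p^`(t.1.2)).[t.1.1] *: t.2.
Proof.
move: {2}(size f) (leqnn (size f)) => n; elim: n f => [|n IH] f szf fn0.
  by move: fn0; rewrite -size_poly_eq0 -leqn0 szf.
have [sz1|/closed_rootP [b rb]] := eqVneq (size f) 1%N.
  exists [::]; split => // p.
  have [c c0 ->] := size_poly1P _ (introT eqP sz1).
  by rewrite -alg_polyC dvdpZl // dvd1p.
have /factor_theorem [g fE] := rb.
have gn0 : g != 0 by apply: contraNneq fn0 => g0; rewrite fE g0 mul0r.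
have szg : (size g <= n)%N.
  move: szf; rewrite fE size_mul ?polyXsubC_eq0 // size_XsubC addn2 /=.
  by [].
have [s [Hs1 Hs2]] := IH g szg gn0.
have [m [u /= unr gE]] := multiplicity_XsubC g b.
rewrite gn0 /= in unr.
have mupg : mup b g = m by rewrite gE mupMr // mup_XsubCX eqxx.
have mupf x : (mup x g <= mup x f)%N.
  by rewrite fE mupM ?polyXsubC_eq0 // leq_addr.
have mupfb : mup b f = m.+1.
  rewrite fE mupM ?polyXsubC_eq0 // mupg -(expr1 ('X - b%:P)) mup_XsubCX eqxx.
  by rewrite addn1.
have rg x : root g x -> root f x by rewrite fE rootM => ->.
have m0 : (m`!%:R : F) != 0 by rewrite pnatr_eq0 -lt0n fact_gt0.
have ub0 : u.[b] != 0 by [].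
pose G := (m`!%:R * u.[b])^-1 *: g.
exists ((b, m, G) :: [seq (t.1.1, t.1.2, t.2 - (t.2^`(m)).[b] *: G) | t <- s]).
split.
  move=> t; rewrite inE => /orP [/eqP -> /=|]; first by rewrite mupfb ltnSn.
  move=> /mapP [t' /Hs1 [rt' lt'] ->] /=; split; first exact: rg.
  exact: leq_trans lt' (mupf _).
move=> p; rewrite big_cons big_map /=.
have [h Qe] := dvdpP _ _ (Hs2 p).
set E := \sum_(t <- s) p^`(t.1.2).[t.1.1] *: t.2.
have key : p^`(m).[b] - \sum_(t <- s) p^`(t.1.2).[t.1.1] * (t.2^`(m)).[b]
    = (u * h).[b] *+ m`!.
  rewrite -derivn_XsubCX_eval -(_ : h * g = ('X - b%:P)^+m * (u*h)); last first.
    by rewrite gE; ring.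
  rewrite -Qe derivnB hornerD hornerN /E.
  by rewrite derivn_sumZ.
have -> : \sum_(j <- s) p^`(j.1.2).[j.1.1] *: (j.2 - (j.2)^`(m).[b] *: G)
    = E - (\sum_(t <- s) p^`(t.1.2).[t.1.1] * (t.2^`(m)).[b]) *: G.
  rewrite /E scaler_suml -sumrB; apply: eq_bigr => t _.
  by rewrite scalerBr scalerA.
have -> : p - (p^`(m).[b] *: G + (E - (\sum_(t <- s) p^`(t.1.2).[t.1.1]
     * (t.2^`(m)).[b]) *: G)) = (p - E) - (p^`(m).[b] -
     \sum_(t <- s) p^`(t.1.2).[t.1.1] * (t.2^`(m)).[b]) *: G.
  by rewrite scalerBl; ring.
rewrite key Qe /G scalerA hornerM.
have -> : (u.[b] * h.[b] *+ m`! * (m`!%:R * u.[b])^-1) = h.[b].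
  by rewrite -mulr_natr; field; rewrite m0 ub0.
rewrite -mul_polyC -mulrBl fE mulrC dvdp_mul2r //.
by rewrite dvdp_XsubCl /root hornerD hornerN hornerC subrr.
Qed.
End PolyAux.

Section Hilb.
Variable R : realType.
Local Notation C := R[i].
Variable V : lmodType C.
Variable ip : V -> V -> C.
Hypothesis ipP : is_inner_product ip.

Local Notation Q v := (ip v v).

Lemma ipL a u v w : ip (a *: u + v) w = a * ip u w + ip v w.
Proof. by move: ipP; rewrite /is_inner_product => -[H _ _ _]; apply: H. Qed.

Lemma ipC u v : ip u v = (ip v u)^*.
Proof. by move: ipP; rewrite /is_inner_product => -[_ H _ _]; apply: H. Qed.

Lemma Q_ge0 v : 0 <= Q v.
Proof. by move: ipP; rewrite /is_inner_product => -[_ _ H _]; apply: H. Qed.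

Lemma ipDl u v w : ip (u + v) w = ip u w + ip v w.
Proof. by have := ipL 1 u v w; rewrite scale1r mul1r. Qed.

Lemma ip0l w : ip 0 w = 0.
Proof.
by apply: (@addrI _ (ip 0 w)); rewrite addr0 -ipDl addr0.
Qed.

Lemma ipZl a u w : ip (a *: u) w = a * ip u w.
Proof. by rewrite -[a *: u]addr0 ipL ip0l addr0. Qed.

Lemma ipNl u w : ip (- u) w = - ip u w.
Proof. by rewrite -scaleN1r ipZl mulN1r. Qed.

Lemma ipBl u v w : ip (u - v) w = ip u w - ip v w.
Proof. by rewrite ipDl ipNl. Qed.

Lemma ipDr u v w : ip w (u + v) = ip w u + ip w v.
Proof. by rewrite ipC ipDl rmorphD [ip w u]ipC [ip w v]ipC. Qed.

Lemma ipZr a u w : ip w (a *: u) = a^* * ip w u.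
Proof. by rewrite ipC ipZl rmorphM [ip w u]ipC. Qed.

Lemma ipNr u w : ip w (- u) = - ip w u.
Proof. by rewrite -scaleN1r ipZr rmorphN1 mulN1r. Qed.

Lemma ip_sumr n (a : 'I_n -> C) (x : 'I_n -> V) w :
  ip w (\sum_(i < n) a i *: x i) = \sum_(i < n) (a i)^* * ip w (x i).
Proof.
elim: n a x => [|n IH] a x; first by rewrite !big_ord0 ipC ip0l conjC0.
by rewrite !big_ord_recr /= ipDr IH ipZr.
Qed.

Lemma QZ a v : Q (a *: v) = `|a| ^+ 2 * Q v.
Proof. by rewrite ipZl ipZr mulrA normCK. Qed.

Lemma QN v : Q (- v) = Q v.
Proof. by rewrite ipNl ipNr opprK. Qed.

Lemma QD u v : Q (u + v) <= 2 * Q u + 2 * Q v.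
Proof.
have -> : 2 * Q u + 2 * Q v = Q (u + v) + Q (u - v).
  rewrite !ipDl !ipDr !ipNl !ipNr; ring.
by rewrite lerDl Q_ge0.
Qed.

Lemma nrm_ge0 v : 0 <= nrm ip v.
Proof. by rewrite /nrm sqrtC_ge0 Q_ge0. Qed.

Lemma nrm2 v : nrm ip v ^+ 2 = Q v.
Proof. by rewrite /nrm sqrtCK. Qed.

Lemma nrm_lt v e : 0 < e -> Q v < e ^+ 2 -> nrm ip v < e.
Proof.
move=> e0 H; rewrite /nrm -(sqrCK (ltW e0)) ltr_sqrtC // ?nnegrE ?Q_ge0 //.
by rewrite exprn_ge0 // ltW.
Qed.

Lemma nrm_lt2 v e : nrm ip v < e -> Q v < e ^+ 2.
Proof.
move=> H; rewrite -nrm2 !expr2.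
by apply: ltr_pM => //; apply: nrm_ge0.
Qed.

Lemma bound_norm1 (a M : C) v : `|a| <= M * nrm ip v -> `|a| <= `|M| * nrm ip v.
Proof.
move=> h; rewrite -(ger0_norm (nrm_ge0 v)) -normrM ger0_norm //.
exact: le_trans (normr_ge0 _) h.
Qed.

Lemma bound_norm (L : V -> C) (M : C) :
  (forall v, `|L v| <= M * nrm ip v) -> forall v, `|L v| <= `|M| * nrm ip v.
Proof.
move=> H v; have h := H v.
rewrite -(ger0_norm (nrm_ge0 v)) -normrM ger0_norm //.
exact: le_trans (normr_ge0 _) h.
Qed.

Lemma bound_norm2 (c M : C) x : `|c| <= `|M| * nrm ip x ->
  `|c| ^+ 2 <= `|M| ^+ 2 * Q x.
Proof.
move=> h; rewrite -nrm2 -exprMn !expr2.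
by apply: ler_pM => //; apply: normr_ge0.
Qed.

Lemma Q0 : Q 0 = 0.
Proof. by rewrite ip0l. Qed.

Lemma Qsum_bound (P : Type) (T : eqType) (s : seq T) (c : P -> T -> C)
    (w : T -> V) (x : P -> V) :
  (forall t, t \in s -> exists M, forall p, `|c p t| <= M * nrm ip (x p)) ->
  exists K, 0 <= K /\ forall p, Q (\sum_(t <- s) c p t *: w t) <= K * Q (x p).
Proof.
elim: s => [|t s IH] H.
  by exists 0; split => // p; rewrite big_nil Q0 mul0r.
have [|K [K0 HK]] := IH.
  by move=> t' ts; apply: H; rewrite inE ts orbT.
have [M HM] := H t (mem_head _ _).
exists (2 * (`|M| ^+ 2 * Q (w t)) + 2 * K); split.
  by rewrite addr_ge0 // mulr_ge0 // mulr_ge0 // ?exprn_ge0 // Q_ge0.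
move=> p; rewrite big_cons; apply: le_trans (QD _ _) _.
rewrite [_ * Q (x p)]mulrDl; apply: lerD; last first.
  by rewrite -mulrA; apply: ler_wpM2l => //.
rewrite QZ -[X in _ <= X]mulrA; apply: ler_wpM2l => //.
rewrite [X in _ <= X]mulrAC; apply: ler_wpM2r; first exact: Q_ge0.
by apply: (@bound_norm2 _ M); apply: bound_norm1; apply: HM.
Qed.

End Hilb.

Lemma small0 (R : numDomainType) (x : R) : (forall e, 0 < e -> `|x| < e) -> x = 0.
Proof.
move=> H; apply/eqP; apply: contraT => nx.
have h : 0 < `|x| by rewrite normr_gt0.
by have := H _ h; rewrite ltxx.
Qed.


Section PV.
Local Open Scope classical_set_scope.
Variable R : realType.
Local Notation C := R[i].
Variable V : lmodType C.
Variable ip : V -> V -> C.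
Variables (Om : set C) (ev : V -> C -> C) (S : V -> V) (pv : {poly C} -> V).
Hypothesis HH : AnalyticHilbertSpace ip Om ev S pv.

Lemma ev_lin a u v z : ev (a *: u + v) z = a * ev u z + ev v z.
Proof. by case: HH => _ [H _] _ _ _; apply: H. Qed.

Lemma ev_inj u v : (forall z, Om z -> ev u z = ev v z) -> u = v.
Proof. by case: HH => _ [_ H] _ _ _; apply: H. Qed.

Lemma ev_S v z : Om z -> ev (S v) z = z * ev v z.
Proof. by case: HH => _ _ _ [H _] _; apply: H. Qed.

Lemma ev_pv p z : Om z -> ev (pv p) z = p.[z].
Proof. by case: HH => _ _ _ _ [H _]; apply: H. Qed.

Lemma pv_lin a p q : pv (a *: p + q) = a *: pv p + pv q.
Proof.
apply: ev_inj => z Oz; rewrite ev_lin !ev_pv //.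
by rewrite hornerD hornerZ.
Qed.

Lemma pv0 : pv 0 = 0.
Proof.
by have := pv_lin (-1) 0 0; rewrite scaler0 addr0 scaleN1r addNr.
Qed.

Lemma pvD p q : pv (p + q) = pv p + pv q.
Proof. by have := pv_lin 1 p q; rewrite !scale1r. Qed.

Lemma pvZ a p : pv (a *: p) = a *: pv p.
Proof. by have := pv_lin a p 0; rewrite !addr0 pv0 addr0. Qed.

Lemma pvN p : pv (- p) = - pv p.
Proof. by have := pvZ (-1) p; rewrite !scaleN1r. Qed.

Lemma pvB p q : pv (p - q) = pv p - pv q.
Proof. by rewrite pvD pvN. Qed.

Lemma pv_sum (I : Type) (r : seq I) (P : pred I) (F : I -> {poly C}) :
  pv (\sum_(i <- r | P i) F i) = \sum_(i <- r | P i) pv (F i).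
Proof. exact: (big_morph pv pvD pv0). Qed.

Lemma S_pv q : S (pv q) = pv ('X * q).
Proof.
by apply: ev_inj => z Oz; rewrite ev_S // !ev_pv // hornerM hornerX.
Qed.

Lemma iter_pv (f : {poly C}) k : iter k S (pv f) = pv ('X^k * f).
Proof.
elim: k => [|k IH]; first by rewrite expr0 mul1r.
by rewrite iterS IH S_pv mulrA -exprS.
Qed.

Lemma lspan_iter (f : {poly C}) n (a : 'I_n -> C) (x : 'I_n -> V) :
  (forall i, [set iter k S (pv f) | k in [set: nat]] (x i)) ->
  exists q, \sum_(i < n) a i *: x i = pv (q * f).
Proof.
elim: n a x => [|n IH] a x H.
  by exists 0; rewrite big_ord0 mul0r pv0.
have [|q Hq] := IH (fun i => a (widen_ord (leqnSn n) i)) (fun i => x (widen_ord (leqnSn n) i)).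
  by move=> i; apply: H.
have [k _ Hk] := H ord_max.
exists (q + a ord_max *: 'X^k); rewrite big_ord_recr /= Hq -Hk iter_pv.
by rewrite mulrDl pvD -scalerAl pvZ.
Qed.

Lemma pv_lspan (f q : {poly C}) :
  lspan [set iter k S (pv f) | k in [set: nat]] (pv (q * f)).
Proof.
exists (size q), (fun i => q`_i), (fun i => iter i S (pv f)); split.
  by move=> i; exists i.
rewrite -{1}(coefK q) poly_def mulr_suml pv_sum; apply: eq_bigr => i _.
by rewrite -scalerAl pvZ iter_pv.
Qed.
End PV.

Theorem mainTheorem5 (R : realType) (Om : set R[i]) (V : lmodType R[i])
  (ip : V -> V -> R[i]) (ev : V -> R[i] -> R[i]) (S : V -> V)
  (pv : {poly R[i]} -> V)
  (HH : AnalyticHilbertSpace ip Om ev S pv)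
  (f : {poly R[i]}) (f_neq0 : f != 0)
  (RZ : forall beta, Rmult ip pv f beta = Zmult f beta)
  (k : R[i] -> nat -> V)
  (hk : forall beta l, root f beta -> (l < Zmult f beta)%N ->
          is_kernel ip pv beta l (k beta l)) :
  cyc ip S (pv f) =
  orth ip (lspan [set w | exists beta l,
     [/\ root f beta, (l < Zmult f beta)%N & w = k beta l]]).
Proof.
have HH' := HH.
case: HH' => [[_ [ipP _]] _ _ _ [_ dense]].
apply: funext => v; apply: propext; split.
- move=> Hv w [n [a [x [Hx ->]]]].
  rewrite ip_sumr //; apply: big1 => i _.
  have [b [l [rb lb ->]]] := Hx i.
  have [L [[Llin [M HM] Lpv] Lk]] := hk _ _ rb lb.
  rewrite Lk; suff -> : L v = 0 by rewrite mulr0.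
  apply: small0 => e e0.
  have HM' := bound_norm ipP HM.
  have M1 : 0 < `|M| + 1 by rewrite ltr_wpDl.
  pose d := e / (`|M| + 1).
  have d0 : 0 < d by rewrite divr_gt0.
  have [u [n' [a' [x' [Hx' ->]]]] Hvu] := Hv d d0.
  have [q Hq] := lspan_iter HH a' Hx'.
  rewrite Hq in Hvu *.
  have Lu : L (pv (q * f)) = 0.
    rewrite Lpv; apply: (@derivn_vanish _ b _ (mup b f)) => //.
    by apply: dvdp_mull; rewrite -mup_geq.
  have -> : L v = L (v - pv (q * f)).
    by have := Llin 1 (v - pv (q * f)) (pv (q * f)); rewrite scale1r subrK mul1r Lu addr0.
  apply: le_lt_trans (HM' _) _.
  apply: le_lt_trans (ler_wpM2l (normr_ge0 M) (ltW Hvu)) _.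
  rewrite /d mulrA ltr_pdivrMr // mulrC mulrDr mulr1 ltrDl //.
- move: v => g Hg e e0.
  have [s [Hs1 Hs2]] := hermite f_neq0.
  have [|K [K0 HK]] := @Qsum_bound _ _ ip ipP {poly R[i]} _ s
     (fun p t => (p^`(t.1.2)).[t.1.1]) (fun t => pv t.2) (fun p => pv p - g).
    move=> t ts; have [rb lb] := Hs1 t ts.
    have [L [[Llin [M HM] Lpv] Lk]] := hk _ _ rb lb.
    have Lg : L g = 0.
      rewrite -Lk; apply: Hg; exists 1%N, (fun _ => 1), (fun _ => k t.1.1 t.1.2).
      split; last by rewrite big_ord1 scale1r.
      by move=> _; exists t.1.1, t.1.2; split.
    exists `|M| => p; rewrite -Lpv.
    have -> : L (pv p) = L (pv p - g).
      by have := Llin 1 (pv p - g) g; rewrite scale1r subrK mul1r Lg addr0.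
    exact: (bound_norm ipP HM).
  pose D : R[i] := 2 * K + 2.
  have D0 : 0 < D by rewrite ltr_wpDl // mulr_ge0.
  have D1 : 1 <= D by rewrite ler_wpDl ?mulr_ge0 // ler1n.
  pose d := e / D.
  have d0 : 0 < d by rewrite divr_gt0.
  have [p Hp] := dense g d d0.
  have [q Hq] := dvdpP _ _ (Hs2 p).
  exists (pv (q * f)); first exact: (pv_lspan HH).
  apply: nrm_lt => //.
  have -> : g - pv (q * f) = (g - pv p) +
      \sum_(t <- s) (p^`(t.1.2)).[t.1.1] *: pv t.2.
    rewrite -Hq (pvB HH) (pv_sum HH).
    under eq_bigr => t _ do rewrite (pvZ HH).
    by rewrite opprB addrA addrAC.
  apply: le_lt_trans (QD ipP _ _) _.
  have H1 := HK p.
  rewrite -opprB QN // in H1.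
  apply: le_lt_trans (lerD (lexx _) (ler_wpM2l _ H1)) _ => //.
  have -> : 2 * ip (g - pv p) (g - pv p) + 2 * (K * ip (g - pv p) (g - pv p))
    = D * ip (g - pv p) (g - pv p) by rewrite /D; ring.
  apply: lt_le_trans (_ : D * d ^+ 2 <= _).
    by rewrite ltr_pM2l //; apply: nrm_lt2.
  have -> : D * d ^+ 2 = e ^+ 2 / D.
    rewrite /d; field; rewrite gt_eqF //.
  by rewrite ler_pdivrMr // ler_peMr // exprn_ge0 // ltW.
Qed.
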